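(* Let $R$ be a commutative ring with $1_R$ which is torsion free (an integral domain), let $M$ be a torsion free $R$-module, and let $\mathbf f$ be an endomorphism of $M$. Suppose: (b) $\mathbf f$ maps $\varphi_0(M)$ onto $\varphi_0(M)$; (d) $\varphi_\varepsilon(x)$, for $\varepsilon\le\varepsilon_*$, are formulas of $\mathscr{L}_{\infty,\aleph_0}(\tau_R)$ generated from atomic formulas by $\exists$ and $\wedge$ (existential positive); (e) $\langle\varphi_\varepsilon(M):\varepsilon\le\varepsilon_*\rangle$ is a $\subseteq$-decreasing continuous sequence of submodules of $M$; (f) $\varphi_{\varepsilon_*}(M)=\{0_M\}$; (g) for each $\varepsilon<\varepsilon_*$, $\varphi_\varepsilon(M)/\varphi_{\varepsilon+1}(M)$ is torsion free of rank $1$, hence isomorphic to a sub-$R$-module of $\mathbb Q_R$; (h) $x_\varepsilon\in\varphi_\varepsilon(M)\setminus\varphi_{\varepsilon+1}(M)$ for $\varepsilon<\varepsilon_*$; (i) $\varphi_0(M)=\mathrm{PC}_M(\{x_\varepsilon:\varepsilon<\varepsilon_*\})$. Then $\mathbf f\restriction\varphi_0(M)$ is one-to-one.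
   Context: $\tau_R$ is the vocabulary of $R$-modules ($+,-,0$ and unary multiplication by each $r\in R$). $\mathbb Q_R$ is the field of fractions of $R$. A decreasing sequence indexed by $\varepsilon\le\varepsilon_*$ is continuous if at each limit $\delta$ the $\delta$-th term is the intersection of the earlier terms. A submodule $N\subseteq M$ is pure if $rN=rM\cap N$ for all $r\in R$; $\mathrm{PC}_M(Y)$ denotes the minimal pure submodule of $M$ containing $Y$. $\varphi(M)=\{a\in M:M\models\varphi[a]\}$. *)

(* Defs.v *)
From HB Require Import structures.
From mathcomp Require Import all_boot all_order all_algebra.
Set Implicit Arguments. Unset Strict Implicit. Unset Printing Implicit Defensive.
Import GRing.Theory.
Local Open Scope ring_scope.

Inductive term (R : Type) : Type :=
  | tVar (n : nat)
  | tZero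
  | tAdd (t1 t2 : term R)
  | tOpp (t : term R)
  | tSub (t1 t2 : term R)
  | tScale (r : R) (t : term R).

(* Formulas generated from atomic formulas (t1 = t2) by arbitrary (infinitary)
   conjunctions and existential quantification over a single variable
   (hence over finitely many variables). *)
Inductive epform (R : Type) : Type :=
  | fAtom (t1 t2 : term R)
  | fConj (I : Type) (F : I -> epform R)
  | fEx (n : nat) (phi : epform R).

Section Semantics.
Variables (R : pzRingType) (M : lmodType R).

Fixpoint teval (v : nat -> M) (t : term R) : M :=
  match t with
  | tVar n => v n
  | tZero => 0
  | tAdd t1 t2 => teval v t1 + teval v t2
  | tOpp t => - teval v t
  | tSub t1 t2 => teval v t1 - teval v t2
  | tScale r t => r *: teval v t
  end.

Fixpoint sat (v : nat -> M) (phi : epform R) : Prop :=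
  match phi with
  | fAtom t1 t2 => teval v t1 = teval v t2
  | fConj _ F => forall i, sat v (F i)
  | fEx n psi => exists a : M, sat (fun k => if k == n then a else v k) psi
  end.

End Semantics.

Fixpoint tfree (R : Type) (n : nat) (t : term R) : Prop :=
  match t with
  | tVar m => m = n
  | tZero => False
  | tAdd t1 t2 => tfree n t1 \/ tfree n t2
  | tOpp t => tfree n t
  | tSub t1 t2 => tfree n t1 \/ tfree n t2
  | tScale _ t => tfree n t
  end.

Fixpoint free_in (R : Type) (n : nat) (phi : epform R) : Prop :=
  match phi with
  | fAtom t1 t2 => tfree n t1 \/ tfree n t2
  | fConj _ F => exists i, free_in n (F i)
  | fEx m psi => n <> m /\ free_in n psi
  end.

Definition one_var (R : Type) (phi : epform R) : Prop :=
  forall n, free_in n phi -> n = 0%N.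

Definition defset {R : pzRingType} (M : lmodType R) (phi : epform R) : M -> Prop :=
  fun a => sat (fun k => if k == 0%N then a else 0) phi.

Section Modules.
Variables (R : pzRingType) (M : lmodType R).

Definition torsion_free : Prop :=
  forall (r : R) (m : M), r *: m = 0 -> r = 0 \/ m = 0.

Definition is_submodule (N : M -> Prop) : Prop :=
  [/\ N 0, (forall a b, N a -> N b -> N (a + b)) & (forall r a, N a -> N (r *: a))].

(* N is pure in M: r N = r M ∩ N for all r *)
Definition is_pure (N : M -> Prop) : Prop :=
  is_submodule N /\
  forall (r : R) (m : M), N (r *: m) -> exists n, N n /\ r *: n = r *: m.

(* N = PC_M(Y): a minimal pure submodule of M containing Y *)
Definition is_PC (N Y : M -> Prop) : Prop :=
  [/\ is_pure N, (forall y, Y y -> N y) &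
      forall N', is_pure N' -> (forall y, Y y -> N' y) -> (forall a, N' a -> N a) ->
                 forall a, N a -> N' a].

(* For submodules B ⊆ A: A/B is torsion free (written on representatives) *)
Definition quot_torsion_free (A B : M -> Prop) : Prop :=
  forall (r : R) (a : M), A a -> r != 0 -> B (r *: a) -> B a.

(* For submodules B ⊆ A: A/B has rank 1, i.e. A/B is nonzero and any two
   elements of A/B are R-linearly dependent (written on representatives) *)
Definition quot_rank1 (A B : M -> Prop) : Prop :=
  (exists a, A a /\ ~ B a) /\
  forall a b, A a -> A b ->
    exists r s : R, (r != 0 \/ s != 0) /\ B (r *: a + s *: b).

End Modules.

(* ---------- Ordinals eps <= eps_* encoded as a well-order with a maximum ---------- *)
Section Order.
Variables (T : Type) (lt : T -> T -> Prop).

Definition well_order : Prop :=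
  [/\ (forall x, ~ lt x x), (forall x y z, lt x y -> lt y z -> lt x z),
      (forall x y, x = y \/ lt x y \/ lt y x) & well_founded lt].

Definition is_least (z : T) : Prop := forall e, z = e \/ lt z e.

Definition is_succ (e e' : T) : Prop :=
  lt e e' /\ forall z, lt e z -> z = e' \/ lt e' z.

Definition is_limit (d : T) : Prop :=
  ~ is_least d /\ ~ (exists e, is_succ e d).

End Order.
Arguments defset {R} M phi _.

(* Main.v *)
Require Import Defs.
From HB Require Import structures.
From mathcomp Require Import all_boot all_order all_algebra.
From Stdlib Require Import Classical.
Import GRing.Theory.
Local Open Scope ring_scope.

Section Helpers.
Variables (R : idomainType) (M : lmodType R) (f : {linear M -> M}).

Lemma teval_f (v w : nat -> M) (t : term R) :
  (forall k, w k = f (v k)) -> teval w t = f (teval v t).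
Proof.
move=> H; elim: t => [n||t1 IH1 t2 IH2|t IH|t1 IH1 t2 IH2|r t IH] /=.
- exact: H.
- by rewrite raddf0.
- by rewrite IH1 IH2 raddfD.
- by rewrite IH raddfN.
- by rewrite IH1 IH2 raddfB.
- by rewrite IH linearZ.
Qed.

Lemma sat_f (phi : epform R) : forall (v w : nat -> M),
  (forall k, w k = f (v k)) -> sat v phi -> sat w phi.
Proof.
elim: phi => [t1 t2|I F IH|n psi IH] v w H /=.
- by move=> E; rewrite (teval_f v w t1 H) (teval_f v w t2 H) E.
- by move=> Hs i; apply: (IH i v w H).
- move=> [a Ha]; exists (f a); apply: (IH _ _ _ Ha) => k.
  by case: (k == n).
Qed.

Lemma defset_f (phi : epform R) a : defset M phi a -> defset M phi (f a).
Proof.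
apply: sat_f => k; case: (k == 0%N) => //; by rewrite raddf0.
Qed.

End Helpers.

Theorem lemma6p3 (R : idomainType) (M : lmodType R) (f : {linear M -> M})
  (T : Type) (lt : T -> T -> Prop) (estar e0 : T)
  (phi : T -> epform R) (x : T -> M) :
  well_order lt ->
  (forall e, e = estar \/ lt e estar) ->
  is_least lt e0 ->
  torsion_free M ->
  (* (b) f maps phi_0(M) onto phi_0(M) *)
  (forall a, defset M (phi e0) a -> defset M (phi e0) (f a)) ->
  (forall b, defset M (phi e0) b -> exists a, defset M (phi e0) a /\ f a = b) ->
  (* (d) each phi_eps is an existential positive formula in one free variable x *)
  (forall e, one_var (phi e)) ->
  (* (e) decreasing continuous sequence of submodules *)
  (forall e, is_submodule (defset M (phi e))) ->
  (forall e z, lt e z -> forall a, defset M (phi z) a -> defset M (phi e) a) ->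
  (forall d, is_limit lt d ->
     forall a, defset M (phi d) a <-> (forall e, lt e d -> defset M (phi e) a)) ->
  (* (f) *)
  (forall a, defset M (phi estar) a <-> a = 0) ->
  (* (g) *)
  (forall e e', lt e estar -> is_succ lt e e' ->
     quot_torsion_free (defset M (phi e)) (defset M (phi e')) /\
     quot_rank1 (defset M (phi e)) (defset M (phi e'))) ->
  (* (h) *)
  (forall e e', lt e estar -> is_succ lt e e' ->
     defset M (phi e) (x e) /\ ~ defset M (phi e') (x e)) ->
  (* (i) *)
  is_PC (defset M (phi e0)) (fun y => exists e, lt e estar /\ y = x e) ->
  (* conclusion: f restricted to phi_0(M) is one-to-one *)
  forall a b, defset M (phi e0) a -> defset M (phi e0) b -> f a = f b -> a = b.
Proof.
move=> [Hirr Htr Htri Hwf] Hstar He0 _ _ Hsurj _ Hsub Hdec Hlim Hfin Hg Hh _.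
set N := fun e => defset M (phi e).
have Nf : forall e c, N e c -> N e (f c) by move=> e c; apply: defset_f.
have Nle : forall e z, (z = e \/ lt e z) -> forall c, N z c -> N e c.
  by move=> e z [->|/Hdec] //.
have Hmin : forall c, N e0 c -> forall z, ~ N z c ->
    exists e e', [/\ is_succ lt e e', N e c, ~ N e' c & (e' = z \/ lt e' z)].
  move=> c Hc0; elim/(well_founded_ind Hwf) => z IH Hz.
  case: (classic (exists e, lt e z /\ ~ N e c)) => [[e [lez He]]|Hno].
    have [e1 [e1' [S1 S2 S3 S4]]] := IH e lez He.
    exists e1, e1'; split => //; right; case: S4 => [->|h]//; exact: Htr h lez.
  have Hall : forall e, lt e z -> N e c.
    by move=> e lez; apply: NNPP => He; apply: Hno; exists e.
  case: (classic (is_limit lt z)) => [Hl|Hnl].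
    by case: Hz; apply/(Hlim z Hl).
  case: (classic (is_least lt z)) => [Hl|Hnl2].
    case: (Hl e0) => [Ez|lz0]; first by case: Hz; rewrite Ez.
    case: (He0 z) => [Ez|l0z]; first by case: Hz; rewrite -Ez.
    by case: (Hirr z); apply: Htr lz0 l0z.
  case: (classic (exists e, is_succ lt e z)) => [[e Hs]|Hns].
    exists e, z; split => //; last by left.
    by apply: Hall; case: Hs.
  by case: Hnl.
have ltstar : forall e e' z, is_succ lt e e' -> (e' = z \/ lt e' z) -> lt e estar.
  move=> e e' z [lee' _] Hz.
  have lez : lt e z by case: Hz => [<-|h]//; exact: Htr lee' h.
  by case: (Hstar z) => [<-|h]//; exact: Htr lez h.
have N0 : forall e c, N e c -> N e0 c.
  by move=> e c; apply: Nle; case: (He0 e) => [->|]; [left|right].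
have Hrk : forall e e', lt e estar -> is_succ lt e e' ->
   forall a, N e a -> ~ N e' a -> N e' (f a) -> forall b, N e b -> N e' (f b).
  move=> e e' les Hs a Ha Hna Hfa b Hb.
  have [Htf [_ Hr1]] := Hg e e' les Hs.
  case: (Hsub e') => S0 SD SZ.
  have [r [s [Hrs Hc]]] := Hr1 a b Ha Hb.
  have [s0|sn0] := eqVneq s 0.
    move: Hrs Hc; rewrite s0 scale0r addr0 eqxx => -[rn0|//] Hra.
    by case: Hna; apply: (Htf r a Ha rn0 Hra).
  apply: (Htf s (f b) (Nf _ _ Hb) sn0).
  have -> : s *: f b = f (r *: a + s *: b) + (-1) *: (r *: f a).
    by rewrite linearD !linearZ /= scaleN1r scalerN addrAC subrr add0r.
  by apply: SD; [apply: Nf | apply: (SZ); apply: (SZ)].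
have G : forall e, lt e estar -> forall e', is_succ lt e e' ->
    forall a, N e a -> N e' (f a) -> N e' a.
  elim/(well_founded_ind Hwf) => e IH les e' Hs a Ha Hfa.
  apply: NNPP => Hna.
  have Hall := Hrk e e' les Hs a Ha Hna Hfa.
  have [Hx Hnx] := Hh e e' les Hs.
  have [c [Hc0 Hfc]] := Hsurj (x e) (N0 _ _ Hx).
  case: (classic (N e c)) => [Hce|Hnce].
    by case: Hnx; rewrite -Hfc; apply: Hall.
  have [z [z' [Sz Hcz Hncz Hz']]] := Hmin c Hc0 e Hnce.
  have lze : lt z e by case: Sz => lzz' _; case: Hz' => [<-|h]//; exact: Htr lzz' h.
  apply: Hncz; apply: (IH z lze (ltstar _ _ _ Sz Hz') z' Sz c Hcz).
  by rewrite Hfc; apply: (Nle z' e) => //; case: Hz' => [->|]; [left|right].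
move=> a b Ha Hb Hfab.
apply/eqP; rewrite -subr_eq0; apply/eqP.
case: (Hsub e0) => S0 SD SZ.
have Hd : N e0 (a - b) by rewrite -scaleN1r; apply: SD => //; apply: SZ.
apply: NNPP => Hnz.
have Hns : ~ N estar (a - b) by move/(Hfin _).
have [z [z' [Sz Hcz Hncz Hz']]] := Hmin _ Hd estar Hns.
apply: Hncz; apply: (G z (ltstar _ _ _ Sz Hz') z' Sz _ Hcz).
have -> : f (a - b) = 0 by rewrite linearB Hfab subrr.
by have [] := Hsub z'.
Qed.
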